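(* Consider the protocol $P_{RL}$ with parameter $N$ on a directed ring of size $n$ with $2\le n\le N$. The set $\mathcal{C}_{NI}$ of configurations (defined in the context) is closed: no configuration outside $\mathcal{C}_{NI}$ is reachable from a configuration in $\mathcal{C}_{NI}$.
   Context: Model. A population is a directed ring of $n\ge 2$ anonymous agents $u_0,\dots,u_{n-1}$ (indices modulo $n$) with arcs $e_i=(u_i,u_{i+1})$. A configuration $C$ assigns a state to each agent; $C\to C'$ means that $C'$ is obtained from $C$ by one interaction on some arc $e_i$, in which initiator $u_i$ and responder $u_{i+1}$ update their states by the transition function and all other agents keep their states. A configuration is reachable from $C$ if it is obtained from $C$ by finitely many such steps. Protocol $P_{RL}$ (parameter $N$). Each agent has variables $\mathit{leader}\in\{0,1\}$, $\mathit{bullet}\in\{0,1,2\}$, $\mathit{shield}\in\{0,1\}$, $\mathit{signal}\in\{0,1\}$, $\mathit{dist}\in\{0,\dots,N\}$. In an interaction with initiator $l$ and responder $r$ the following are executed in order: 1. If $l.\mathit{leader}=1$ then $l.\mathit{dist}\gets 0$. 2. If $r.\mathit{leader}=1$ then $r.\mathit{dist}\gets 0$; else if $r.\mathit{bullet}=0$ then $r.\mathit{dist}\gets\min(l.\mathit{dist}+1,N)$. 3. If $r.\mathit{dist}=N$ then $r.\mathit{leader}\gets1$, $r.\mathit{bullet}\gets2$, $r.\mathit{shield}\gets1$, $r.\mathit{signal}\gets0$, $r.\mathit{dist}\gets0$. 4. If $l.\mathit{leader}=1$ and $l.\mathit{signal}=1$ then $l.\mathit{bullet}\gets2$, $l.\mathit{shield}\gets1$,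 $l.\mathit{signal}\gets0$. 5. If $r.\mathit{leader}=1$ and $r.\mathit{signal}=1$ then $r.\mathit{bullet}\gets1$, $r.\mathit{shield}\gets0$, $r.\mathit{signal}\gets0$. 6. If $l.\mathit{bullet}>0$ and $r.\mathit{leader}=1$: set $r.\mathit{leader}\gets0$ if ($l.\mathit{bullet}=2$ and $r.\mathit{shield}=0$); then $l.\mathit{bullet}\gets0$. Else, if $l.\mathit{bullet}>0$ and $r.\mathit{leader}=0$: if $r.\mathit{bullet}=0$ then $r.\mathit{bullet}\gets l.\mathit{bullet}$; then $l.\mathit{bullet}\gets0$ and $r.\mathit{signal}\gets0$. 7. $l.\mathit{signal}\gets\max(l.\mathit{signal},r.\mathit{signal},r.\mathit{leader})$. An agent is a leader if $\mathit{leader}=1$ and a follower otherwise. Definitions (in a configuration with at least one leader). $\mathrm{dist}_L(i)=\min\{j\ge0: u_{i-j}.\mathit{leader}=1\}$ and $\mathrm{dist}_R(i)=\min\{j\ge0: u_{i+j}.\mathit{leader}=1\}$. $\mathrm{peaceful}(i)$ holds iff $u_{i-\mathrm{dist}_L(i)}.\mathit{shield}=1$ and $u_{i-j}.\mathit{signal}=0$ for all $0\le j\le\mathrm{dist}_L(i)$. $\mathrm{modest}(i)$ holds iff $\mathrm{peaceful}(i)$ holds and $u_{i-j}.\mathit{dist}\le\mathrm{dist}_L(i-j)$ for all $0\le j\le\mathrm{dist}_L(i)$. $\mathrm{secure}(i)$ holds iff $u_i.\mathit{dist}=0$ when $u_i.\mathit{leader}=1$, and $u_i.\mathit{dist}\le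 N-\mathrm{dist}_R(i)$ when $u_i.\mathit{leader}=0$. $\mathcal{C}_{PB}$ is the set of configurations with at least one leader in which every $u_j$ with $u_j.\mathit{bullet}=2$ satisfies $\mathrm{peaceful}(j)$. $\mathcal{C}_{NI}$ is the set of configurations in $\mathcal{C}_{PB}$ in which every agent $u_i$ satisfies $\mathrm{secure}(i)$ and every $u_j$ with $u_j.\mathit{bullet}=2$ satisfies $\mathrm{modest}(j)$. *)

(* Defs.v *)
From Stdlib Require Import Relation_Operators.
From mathcomp Require Import all_boot.
Set Implicit Arguments. Unset Strict Implicit. Unset Printing Implicit Defensive.

Record AState (N : nat) := MkSt {
  leader : bool;
  bullet : 'I_3;
  shield : bool;
  signal : bool;
  dist   : 'I_N.+1
}.

Section Protocol.
Variable N : nat.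

Definition set_leader (s : AState N) b := @MkSt N b (bullet s) (shield s) (signal s) (dist s).
Definition set_bullet (s : AState N) b := @MkSt N (leader s) b (shield s) (signal s) (dist s).
Definition set_shield (s : AState N) b := @MkSt N (leader s) (bullet s) b (signal s) (dist s).
Definition set_signal (s : AState N) b := @MkSt N (leader s) (bullet s) (shield s) b (dist s).
Definition set_dist (s : AState N) d := @MkSt N (leader s) (bullet s) (shield s) (signal s) d.

Definition b0 : 'I_3 := @Ordinal 3 0 isT.
Definition b1 : 'I_3 := @Ordinal 3 1 isT.
Definition b2 : 'I_3 := @Ordinal 3 2 isT.
Definition d0 : 'I_N.+1 := ord0.

(* The transition function: (initiator, responder) -> (initiator', responder'),
   executing steps 1..7 in order. *)
Definition delta (l r : AState N) : AState N * AState N :=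
  let l := if leader l then set_dist l d0 else l in
  let r := if leader r then set_dist r d0
           else if bullet r == b0 then set_dist r (inord (minn (dist l).+1 N))
           else r in
  let r := if nat_of_ord (dist r) == N then @MkSt N true b2 true false d0 else r in
  let l := if leader l && signal l
           then set_signal (set_shield (set_bullet l b2) true) false else l in
  let r := if leader r && signal r
           then set_signal (set_shield (set_bullet r b1) false) false else r in
  let (l, r) :=
    if (0 < bullet l) && leader r then
      (set_bullet l b0,
       if (bullet l == b2) && ~~ shield r then set_leader r false else r)
    else if (0 < bullet l) && ~~ leader r then
      (set_bullet l b0,
       set_signal (if bullet r == b0 then set_bullet r (bullet l) else r) false)
    else (l, r) in
  (set_signal l [|| signal l, signal r | leader r], r).

End Protocol.

(* Configurations of a directed ring of n agents u_0..u_{n-1};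
   arc e_i = (u_i, u_{i+1 mod n}); ordS is successor mod n. *)
Definition config (n N : nat) := 'I_n -> AState N.

Section Ring.
Variables n N : nat.
Implicit Types (C : config n N) (i : 'I_n).

Definition step C C' : Prop :=
  exists i : 'I_n,
    forall j : 'I_n,
      C' j = if j == i then (delta (C i) (C (ordS i))).1
             else if j == ordS i then (delta (C i) (C (ordS i))).2
             else C j.

Definition reachable : config n N -> config n N -> Prop := @clos_refl_trans (config n N) step.

Definition back (j : nat) i : 'I_n := iter j (@ord_pred n) i.
Definition fwd (j : nat) i : 'I_n := iter j (@ordS n) i.

Definition has_leader C : Prop := exists i, leader (C i).

(* dist_L(i) = min {j >= 0 : u_{i-j} is a leader}; dist_R similarly.
   (Only meaningful when a leader exists, in which case the min is < n.) *)
Definition distL C i : nat := find (fun j => leader (C (back j i))) (iota 0 n).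
Definition distR C i : nat := find (fun j => leader (C (fwd j i))) (iota 0 n).

Definition peaceful C i : Prop :=
  shield (C (back (distL C i) i)) /\
  forall j, j <= distL C i -> signal (C (back j i)) = false.

Definition modest C i : Prop :=
  peaceful C i /\
  forall j, j <= distL C i -> (dist (C (back j i)) <= distL C (back j i))%N.

Definition secure C i : Prop :=
  if leader (C i) then nat_of_ord (dist (C i)) = 0
  else (dist (C i) <= N - distR C i)%N.

Definition C_PB C : Prop :=
  has_leader C /\ forall j, nat_of_ord (bullet (C j)) = 2 -> peaceful C j.

Definition C_NI C : Prop :=
  C_PB C /\ (forall i, secure C i) /\
  (forall j, nat_of_ord (bullet (C j)) = 2 -> modest C j).

End Ring.

(* Main.v *)
Require Import Defs.
From Stdlib Require Import Relation_Operators.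
From mathcomp Require Import all_boot.
From mathcomp Require Import zify.
Set Implicit Arguments. Unset Strict Implicit. Unset Printing Implicit Defensive.

Section Idx.
Variable n : nat.

Definition fnd (p : pred nat) := find p (iota 0 n).
Implicit Types p : pred nat.

Lemma fnd_min p j : j < fnd p -> ~~ p j.
Proof.
rewrite /fnd => H. have Hs : j < n.
  have := find_size p (iota 0 n); rewrite size_iota; lia.
have := before_find 0 H. rewrite nth_iota //= => ->; by [].
Qed.

Lemma fnd_le p j : j < n -> p j -> fnd p <= j.
Proof. move=> Hj Hp. rewrite leqNgt; apply/negP => /fnd_min. by rewrite Hp. Qed.

Lemma fnd_ex p j : j < n -> p j -> fnd p < n /\ p (fnd p).
Proof.
move=> Hj Hp. have Hh : has p (iota 0 n).
  apply/hasP; exists j => //. by rewrite mem_iota.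
have Hl : fnd p < n. by move: Hh; rewrite has_find size_iota.
split => //. have := nth_find 0 Hh. by rewrite nth_iota.
Qed.

Lemma fnd_spec p d : d < n -> p d -> (forall j, j < d -> ~~ p j) -> fnd p = d.
Proof.
move=> Hd Hp Hm. have [Hl Hf] := fnd_ex Hd Hp.
apply/eqP; rewrite eqn_leq (fnd_le Hd Hp) /= leqNgt; apply/negP => /Hm.
by rewrite Hf.
Qed.

Lemma val_ordS (i : 'I_n) : val (ordS i) = i.+1 %% n.
Proof. by []. Qed.

Lemma val_fwd j (i : 'I_n) : val (fwd j i) = (i + j) %% n.
Proof.
elim: j => [|j IH] /=; first by rewrite addn0 modn_small.
change (val (ordS (fwd j i)) = (i + j.+1) %% n). rewrite val_ordS IH -addn1 modnDml; congr (_ %% _); lia.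
Qed.

Lemma fwd_S j (i : 'I_n) : fwd j.+1 i = fwd j (ordS i).
Proof. by rewrite /fwd iterSr. Qed.
Lemma fwd_S' j (i : 'I_n) : fwd j.+1 i = ordS (fwd j i).
Proof. by []. Qed.
Lemma back_S j (i : 'I_n) : back j.+1 i = back j (ord_pred i).
Proof. by rewrite /back iterSr. Qed.
Lemma back_S' j (i : 'I_n) : back j.+1 i = ord_pred (back j i).
Proof. by []. Qed.

Lemma back_fwd j (i : 'I_n) : back j (fwd j i) = i.
Proof. elim: j i => [|j IH] i //. by rewrite back_S fwd_S' ordSK IH. Qed.
Lemma fwd_back j (i : 'I_n) : fwd j (back j i) = i.
Proof. elim: j i => [|j IH] i //. by rewrite fwd_S back_S' ord_predK IH. Qed.

Lemma fwd_n (i : 'I_n) : fwd n i = i.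
Proof. apply: val_inj; rewrite val_fwd /= modnDr modn_small //. Qed.

Lemma fwd_add a b (i : 'I_n) : fwd (a + b) i = fwd a (fwd b i).
Proof. by rewrite /fwd iterD. Qed.
Lemma back_add a b (i : 'I_n) : back (a + b) i = back a (back b i).
Proof. by rewrite /back iterD. Qed.

Lemma fwd_reach (i k : 'I_n) : exists2 j, j < n & fwd j i = k.
Proof.
exists ((k + n - i) %% n); first by rewrite ltn_mod; have := ltn_ord i; lia.
apply: val_inj; rewrite val_fwd modnDmr.
have -> : i + (k + n - i) = k + n by have := ltn_ord i; lia.
by rewrite modnDr modn_small.
Qed.

Lemma back_reach (i k : 'I_n) : exists2 j, j < n & back j i = k.
Proof.
have [j Hj E] := fwd_reach k i. exists j => //. by rewrite -E back_fwd.
Qed.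

Lemma back_n (i : 'I_n) : back n i = i.
Proof. by rewrite -{1}(fwd_n i) back_fwd. Qed.

End Idx.


Section Dist.
Variables n N : nat.
Hypothesis Hn : 2 <= n.
Implicit Types C : config n N.

Lemma hasL_back C i : has_leader C -> exists2 j, j < n & leader (C (back j i)).
Proof. move=> [k Hk]. have [j Hj E] := back_reach i k. exists j => //. by rewrite E. Qed.
Lemma hasL_fwd C i : has_leader C -> exists2 j, j < n & leader (C (fwd j i)).
Proof. move=> [k Hk]. have [j Hj E] := fwd_reach i k. exists j => //. by rewrite E. Qed.

Lemma distL_ex C i : has_leader C -> distL C i < n /\ leader (C (back (distL C i) i)).
Proof. move=> /(hasL_back i) [j Hj Hl]. exact: (@fnd_ex n _ j). Qed.
Lemma distR_ex C i : has_leader C -> distR C i < n /\ leader (C (fwd (distR C i) i)).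
Proof. move=> /(hasL_fwd i) [j Hj Hl]. exact: (@fnd_ex n _ j). Qed.

Lemma distL_min C i j : j < distL C i -> ~~ leader (C (back j i)).
Proof. exact: (@fnd_min n (fun j => leader (C (back j i)))). Qed.
Lemma distR_min C i j : j < distR C i -> ~~ leader (C (fwd j i)).
Proof. exact: (@fnd_min n (fun j => leader (C (fwd j i)))). Qed.

Lemma distL_le C i j : j < n -> leader (C (back j i)) -> distL C i <= j.
Proof. exact: (@fnd_le n (fun j => leader (C (back j i)))). Qed.
Lemma distR_le C i j : j < n -> leader (C (fwd j i)) -> distR C i <= j.
Proof. exact: (@fnd_le n (fun j => leader (C (fwd j i)))). Qed.

Lemma distL_spec C i d : d < n -> leader (C (back d i)) ->
  (forall j, j < d -> ~~ leader (C (back j i))) -> distL C i = d.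
Proof. exact: (@fnd_spec n (fun j => leader (C (back j i)))). Qed.
Lemma distR_spec C i d : d < n -> leader (C (fwd d i)) ->
  (forall j, j < d -> ~~ leader (C (fwd j i))) -> distR C i = d.
Proof. exact: (@fnd_spec n (fun j => leader (C (fwd j i)))). Qed.

Lemma distL0 C i : leader (C i) -> distL C i = 0.
Proof. move=> H; apply: distL_spec => //; lia. Qed.
Lemma distR0 C i : leader (C i) -> distR C i = 0.
Proof. move=> H; apply: distR_spec => //; lia. Qed.

Lemma distL_pos C i : has_leader C -> ~~ leader (C i) -> 0 < distL C i.
Proof.
move=> HL Hi; have [_ H] := distL_ex i HL. move: H; case E: (distL C i) => //.
move=> H; by rewrite H in Hi.
Qed.
Lemma distR_pos C i : has_leader C -> ~~ leader (C i) -> 0 < distR C i.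
Proof.
move=> HL Hi; have [_ H] := distR_ex i HL. move: H; case E: (distR C i) => //.
move=> H; by rewrite H in Hi.
Qed.

Lemma distL_back C i j : has_leader C -> j <= distL C i ->
  distL C (back j i) = distL C i - j.
Proof.
move=> HL Hj; have [Hd Hl] := distL_ex i HL.
apply: distL_spec; first lia.
  by rewrite -back_add subnK.
move=> j' Hj'; rewrite -back_add; apply: distL_min; lia.
Qed.

Lemma distR_succ C x : has_leader C -> ~~ leader (C x) ->
  distR C x = (distR C (ordS x)).+1.
Proof.
move=> HL Hx; have [Hd Hl] := distR_ex (ordS x) HL.
apply: distR_spec.
- have : distR C (ordS x) != n.-1.
    apply/negP => /eqP E; rewrite E -fwd_S prednK ?fwd_n in Hl; last lia.
    by rewrite Hl in Hx.
  lia.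
- by rewrite fwd_S.
- case=> [|j] Hj //. rewrite fwd_S; apply: distR_min; lia.
Qed.

Lemma distL_pred C x : has_leader C -> ~~ leader (C x) ->
  distL C x = (distL C (ord_pred x)).+1.
Proof.
move=> HL Hx; have [Hd Hl] := distL_ex (ord_pred x) HL.
apply: distL_spec.
- have : distL C (ord_pred x) != n.-1.
    apply/negP => /eqP E; rewrite E -back_S prednK ?back_n in Hl; last lia.
    by rewrite Hl in Hx.
  lia.
- by rewrite back_S.
- case=> [|j] Hj //. rewrite back_S; apply: distL_min; lia.
Qed.

Lemma distLR C x : has_leader C -> ~~ leader (C x) -> distL C x + distR C x <= n.
Proof.
move=> HL Hx; have [Hd Hl] := distL_ex x HL.
have Hp := distL_pos HL Hx.
set d := distL C x in Hd Hl Hp *.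
have E : fwd (n - d) x = back d x.
  rewrite -{1}(fwd_back d x) -fwd_add subnK ?fwd_n //; lia.
have := @distR_le C x (n - d). rewrite E => H. have := H ltac:(lia) Hl. lia.
Qed.

Lemma distL_agree C C' x : has_leader C ->
  (forall j, j <= distL C x -> leader (C' (back j x)) = leader (C (back j x))) ->
  distL C' x = distL C x.
Proof.
move=> HL H; have [Hd Hl] := distL_ex x HL.
apply: distL_spec => //; first by rewrite H.
move=> j Hj; rewrite H; [apply: distL_min|]; lia.
Qed.
Lemma distR_agree C C' x : has_leader C ->
  (forall j, j <= distR C x -> leader (C' (fwd j x)) = leader (C (fwd j x))) ->
  distR C' x = distR C x.
Proof.
move=> HL H; have [Hd Hl] := distR_ex x HL.
apply: distR_spec => //; first by rewrite H.
move=> j Hj; rewrite H; [apply: distR_min|]; lia.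
Qed.

Definition loc C x (e : bool) : Prop :=
  [/\ signal (C x) = false, dist (C x) <= distL C x & (e -> shield (C x))].

Lemma modestE C k : modest C k <->
  (forall j, j <= distL C k -> loc C (back j k) (j == distL C k)).
Proof.
split.
- move=> [[Hs Hsig] Hd] j Hj; split; [exact: Hsig|exact: Hd|].
  by move/eqP => ->.
- move=> H; split; [split|].
  + by have [_ _ ] := H _ (leqnn _); apply; rewrite eqxx.
  + by move=> j /H [].
  + by move=> j /H [].
Qed.

End Dist.


Section Delta.
Variable N : nat.
Implicit Types l r : AState N.

Definition st1 l := if leader l then set_dist l (d0 N) else l.
Definition st2 l r := if leader r then set_dist r (d0 N)
           else if bullet r == b0 then set_dist r (inord (minn (dist l).+1 N))
           else r.
Definition st3 r := if nat_of_ord (dist r) == N then @MkSt N true b2 true false (d0 N) else r.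
Definition st4 l := if leader l && signal l
           then set_signal (set_shield (set_bullet l b2) true) false else l.
Definition st5 r := if leader r && signal r
           then set_signal (set_shield (set_bullet r b1) false) false else r.
Definition st6 l r :=
    if (0 < bullet l) && leader r then
      (set_bullet l b0,
       if (bullet l == b2) && ~~ shield r then set_leader r false else r)
    else if (0 < bullet l) && ~~ leader r then
      (set_bullet l b0,
       set_signal (if bullet r == b0 then set_bullet r (bullet l) else r) false)
    else (l, r).
Definition st7 (p : AState N * AState N) :=
  let (l, r) := p in (set_signal l [|| signal l, signal r | leader r], r).

Lemma deltaE l r : delta l r = st7 (st6 (st4 (st1 l)) (st5 (st3 (st2 (st1 l) r)))).
Proof. by []. Qed.

Lemma eqb0 (x : 'I_3) : (x == b0) = (val x == 0). Proof. by []. Qed.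
Lemma eqb2 (x : 'I_3) : (x == b2) = (val x == 2). Proof. by []. Qed.

Lemma st1E l : [/\ leader (st1 l) = leader l, bullet (st1 l) = bullet l,
  shield (st1 l) = shield l, signal (st1 l) = signal l &
  nat_of_ord (dist (st1 l)) = if leader l then 0 else nat_of_ord (dist l)].
Proof. case: l => [[] b s g d]; by split. Qed.

Lemma st4E l : [/\ leader (st4 l) = leader l,
  nat_of_ord (bullet (st4 l)) = if leader l && signal l then 2 else nat_of_ord (bullet l),
  shield (st4 l) = shield l || (leader l && signal l),
  signal (st4 l) = signal l && ~~ leader l &
  dist (st4 l) = dist l].
Proof. case: l => [[] b s [] d]; rewrite /st4 /=; split; rewrite /= ?orbT ?orbF ?andbT ?andbF //. Qed.

Lemma st5E r : [/\ leader (st5 r) = leader r,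
  nat_of_ord (bullet (st5 r)) = if leader r && signal r then 1 else nat_of_ord (bullet r),
  shield (st5 r) = shield r && ~~ (leader r && signal r),
  signal (st5 r) = signal r && ~~ leader r &
  dist (st5 r) = dist r].
Proof. case: r => [[] b s [] d]; rewrite /st5 /=; split; rewrite /= ?orbT ?orbF ?andbT ?andbF //. Qed.

Lemma st2E l r : [/\ leader (st2 l r) = leader r, bullet (st2 l r) = bullet r,
  shield (st2 l r) = shield r, signal (st2 l r) = signal r &
  nat_of_ord (dist (st2 l r)) = if leader r then 0 else if nat_of_ord (bullet r) == 0
     then minn (dist l).+1 N else nat_of_ord (dist r)].
Proof.
case: r => [[] b s g d]; rewrite /st2 /=; first by split.
rewrite eqb0; case: (_ == 0) => /=; split => //=.
by rewrite inordK // ltnS geq_minr.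
Qed.

Lemma st3E r : nat_of_ord (dist r) != N -> st3 r = r.
Proof. by rewrite /st3 => /negbTE ->. Qed.

Lemma st3F r : [/\ leader (st3 r) = leader r || (nat_of_ord (dist r) == N),
  signal (st3 r) = signal r && (nat_of_ord (dist r) != N),
  nat_of_ord (dist r) == N -> nat_of_ord (bullet (st3 r)) = 2 /\ shield (st3 r) &
  nat_of_ord (dist r) != N -> st3 r = r].
Proof. rewrite /st3; case: (_ == N) => /=; split; rewrite ?orbT ?orbF ?andbT ?andbF //. Qed.

Lemma st6E L R : (st6 L R).1 = if 0 < bullet L then set_bullet L b0 else L.
Proof. rewrite /st6; case: (0 < bullet L); case: (leader R) => //. Qed.

Lemma st6E2 L R : (st6 L R).2 = if 0 < bullet L then
  (if leader R then (if (nat_of_ord (bullet L) == 2) && ~~ shield R then set_leader R false else R)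
   else set_signal (if nat_of_ord (bullet R) == 0 then set_bullet R (bullet L) else R) false)
  else R.
Proof. rewrite /st6; case: (0 < bullet L); case: (leader R) => //. Qed.

Lemma st7E p : (st7 p).1 = set_signal p.1 [|| signal p.1, signal p.2 | leader p.2]
  /\ (st7 p).2 = p.2.
Proof. by case: p. Qed.



Lemma P1 l r : leader (delta l r).1 = leader l.
Proof.
rewrite deltaE (st7E _).1 st6E /=.
have [E4 _ _ _ _] := st4E (st1 l). have [E1 _ _ _ _] := st1E l.
by case: ifP => _ /=; rewrite E4 E1.
Qed.

Lemma P2 l r : nat_of_ord (bullet (delta l r).1) = 0.
Proof.
rewrite deltaE (st7E _).1 st6E /=. case: ifP => //=. lia.
Qed.

Lemma P8 l r : nat_of_ord (dist (delta l r).1) = if leader l then 0 else dist l.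
Proof.
rewrite deltaE (st7E _).1 st6E /=. 
have [_ _ _ _ E4] := st4E (st1 l). have [_ _ _ _ E1] := st1E l.
by case: ifP => _ /=; rewrite E4 E1.
Qed.




Ltac fin l r := case: (leader r) => //=; case: (leader l) => //=; case: (signal l) => //=;
  case: (signal r) => //=; case: (shield r) => //=; case: (shield l) => //=;
  case: (bullet l) => [[|[|[|?]]] ?] //=; case: (bullet r) => [[|[|[|?]]] ?] //=;
  try (by intros; left); try (by intros; right); try (by intros; right; split => //; left); try (by intros; right; split => //; right).

Definition NF l r := nat_of_ord (dist (st2 (st1 l) r)) != N.

Lemma P3 l r : NF l r -> leader (delta l r).2 -> leader r.
Proof.
move=> H3; rewrite deltaE (st3E H3) ?(st7E _).1 ?(st7E _).2 ?st6E ?st6E2 /=.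
have [La Lb Lc Ld Le] := st4E (st1 l); have [Ma Mb Mc Md Me] := st1E l;
have [Ra Rb Rc Rd Re] := st5E (st2 (st1 l) r); have [Sa Sb Sc Sd Se] := st2E (st1 l) r;
rewrite ?Ma ?Mb ?Mc ?Md ?Me in La Lb Lc Ld Le;
rewrite ?Sa ?Sb ?Sc ?Sd ?Se in Ra Rb Rc Rd Re.
repeat (case: ifP => /=).
all: rewrite ?La ?Lb ?Lc ?Ld ?Le ?Ra ?Rb ?Rc ?Rd ?Re ?Se ?Me.
all: fin l r.
Qed.

Lemma P4 l r : NF l r -> signal (delta l r).2 -> signal r.
Proof.
move=> H3; rewrite deltaE (st3E H3) ?(st7E _).1 ?(st7E _).2 ?st6E ?st6E2 /=.
have [La Lb Lc Ld Le] := st4E (st1 l); have [Ma Mb Mc Md Me] := st1E l;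
have [Ra Rb Rc Rd Re] := st5E (st2 (st1 l) r); have [Sa Sb Sc Sd Se] := st2E (st1 l) r;
rewrite ?Ma ?Mb ?Mc ?Md ?Me in La Lb Lc Ld Le;
rewrite ?Sa ?Sb ?Sc ?Sd ?Se in Ra Rb Rc Rd Re.
repeat (case: ifP => /=).
all: rewrite ?La ?Lb ?Lc ?Ld ?Le ?Ra ?Rb ?Rc ?Rd ?Re ?Se ?Me.
all: fin l r.
Qed.

Lemma P5 l r : NF l r -> leader r -> nat_of_ord (dist (delta l r).2) = 0.
Proof.
move=> H3; rewrite deltaE (st3E H3) ?(st7E _).1 ?(st7E _).2 ?st6E ?st6E2 /=.
have [La Lb Lc Ld Le] := st4E (st1 l); have [Ma Mb Mc Md Me] := st1E l;
have [Ra Rb Rc Rd Re] := st5E (st2 (st1 l) r); have [Sa Sb Sc Sd Se] := st2E (st1 l) r;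
rewrite ?Ma ?Mb ?Mc ?Md ?Me in La Lb Lc Ld Le;
rewrite ?Sa ?Sb ?Sc ?Sd ?Se in Ra Rb Rc Rd Re.
repeat (case: ifP => /=).
all: rewrite ?La ?Lb ?Lc ?Ld ?Le ?Ra ?Rb ?Rc ?Rd ?Re ?Se ?Me.
all: fin l r.
Qed.

Lemma P6 l r : NF l r -> ~~ leader r -> nat_of_ord (bullet r) = 0 -> nat_of_ord (dist (delta l r).2) = minn (if leader l then 0 else dist l).+1 N.
Proof.
move=> H3; rewrite deltaE (st3E H3) ?(st7E _).1 ?(st7E _).2 ?st6E ?st6E2 /=.
have [La Lb Lc Ld Le] := st4E (st1 l); have [Ma Mb Mc Md Me] := st1E l;
have [Ra Rb Rc Rd Re] := st5E (st2 (st1 l) r); have [Sa Sb Sc Sd Se] := st2E (st1 l) r;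
rewrite ?Ma ?Mb ?Mc ?Md ?Me in La Lb Lc Ld Le;
rewrite ?Sa ?Sb ?Sc ?Sd ?Se in Ra Rb Rc Rd Re.
repeat (case: ifP => /=).
all: rewrite ?La ?Lb ?Lc ?Ld ?Le ?Ra ?Rb ?Rc ?Rd ?Re ?Se ?Me.
all: fin l r.
Qed.

Lemma P7 l r : NF l r -> ~~ leader r -> nat_of_ord (bullet r) != 0 -> nat_of_ord (dist (delta l r).2) = dist r.
Proof.
move=> H3; rewrite deltaE (st3E H3) ?(st7E _).1 ?(st7E _).2 ?st6E ?st6E2 /=.
have [La Lb Lc Ld Le] := st4E (st1 l); have [Ma Mb Mc Md Me] := st1E l;
have [Ra Rb Rc Rd Re] := st5E (st2 (st1 l) r); have [Sa Sb Sc Sd Se] := st2E (st1 l) r;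
rewrite ?Ma ?Mb ?Mc ?Md ?Me in La Lb Lc Ld Le;
rewrite ?Sa ?Sb ?Sc ?Sd ?Se in Ra Rb Rc Rd Re.
repeat (case: ifP => /=).
all: rewrite ?La ?Lb ?Lc ?Ld ?Le ?Ra ?Rb ?Rc ?Rd ?Re ?Se ?Me.
all: fin l r.
Qed.

Lemma P9 l r : NF l r -> leader r -> signal r = false -> shield r -> leader (delta l r).2 /\ shield (delta l r).2.
Proof.
move=> H3; rewrite deltaE (st3E H3) ?(st7E _).1 ?(st7E _).2 ?st6E ?st6E2 /=.
have [La Lb Lc Ld Le] := st4E (st1 l); have [Ma Mb Mc Md Me] := st1E l;
have [Ra Rb Rc Rd Re] := st5E (st2 (st1 l) r); have [Sa Sb Sc Sd Se] := st2E (st1 l) r;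
rewrite ?Ma ?Mb ?Mc ?Md ?Me in La Lb Lc Ld Le;
rewrite ?Sa ?Sb ?Sc ?Sd ?Se in Ra Rb Rc Rd Re.
repeat (case: ifP => /=).
all: rewrite ?La ?Lb ?Lc ?Ld ?Le ?Ra ?Rb ?Rc ?Rd ?Re ?Se ?Me.
all: fin l r.
Qed.

Lemma P11 l r : NF l r -> (signal l ==> leader l) -> ~~ leader (delta l r).2 -> (~~ leader r ==> [|| ~~ signal r, nat_of_ord (bullet l) != 0 | leader l && signal l]) -> signal (delta l r).1 = false.
Proof.
move=> H3; rewrite deltaE (st3E H3) ?(st7E _).1 ?(st7E _).2 ?st6E ?st6E2 /=.
have [La Lb Lc Ld Le] := st4E (st1 l); have [Ma Mb Mc Md Me] := st1E l;
have [Ra Rb Rc Rd Re] := st5E (st2 (st1 l) r); have [Sa Sb Sc Sd Se] := st2E (st1 l) r;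
rewrite ?Ma ?Mb ?Mc ?Md ?Me in La Lb Lc Ld Le;
rewrite ?Sa ?Sb ?Sc ?Sd ?Se in Ra Rb Rc Rd Re.
repeat (case: ifP => /=).
all: rewrite ?La ?Lb ?Lc ?Ld ?Le ?Ra ?Rb ?Rc ?Rd ?Re ?Se ?Me.
all: fin l r.
Qed.

Lemma P12 l r : NF l r -> leader l -> (shield l || signal l) -> shield (delta l r).1.
Proof.
move=> H3; rewrite deltaE (st3E H3) ?(st7E _).1 ?(st7E _).2 ?st6E ?st6E2 /=.
have [La Lb Lc Ld Le] := st4E (st1 l); have [Ma Mb Mc Md Me] := st1E l;
have [Ra Rb Rc Rd Re] := st5E (st2 (st1 l) r); have [Sa Sb Sc Sd Se] := st2E (st1 l) r;
rewrite ?Ma ?Mb ?Mc ?Md ?Me in La Lb Lc Ld Le;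
rewrite ?Sa ?Sb ?Sc ?Sd ?Se in Ra Rb Rc Rd Re.
repeat (case: ifP => /=).
all: rewrite ?La ?Lb ?Lc ?Ld ?Le ?Ra ?Rb ?Rc ?Rd ?Re ?Se ?Me.
all: fin l r.
Qed.

Lemma P13 l r : NF l r -> nat_of_ord (bullet (delta l r).2) = 2 -> nat_of_ord (bullet r) = 2 \/ [/\ ~~ leader r, nat_of_ord (bullet r) = 0 & (nat_of_ord (bullet l) = 2 \/ leader l && signal l)].
Proof.
move=> H3; rewrite deltaE (st3E H3) ?(st7E _).1 ?(st7E _).2 ?st6E ?st6E2 /=.
have [La Lb Lc Ld Le] := st4E (st1 l); have [Ma Mb Mc Md Me] := st1E l;
have [Ra Rb Rc Rd Re] := st5E (st2 (st1 l) r); have [Sa Sb Sc Sd Se] := st2E (st1 l) r;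
rewrite ?Ma ?Mb ?Mc ?Md ?Me in La Lb Lc Ld Le;
rewrite ?Sa ?Sb ?Sc ?Sd ?Se in Ra Rb Rc Rd Re.
repeat (case: ifP => /=).
all: rewrite ?La ?Lb ?Lc ?Ld ?Le ?Ra ?Rb ?Rc ?Rd ?Re ?Se ?Me.
all: fin l r.
Qed.

Lemma P14 l r : NF l r -> leader r -> ~~ leader (delta l r).2 -> (nat_of_ord (bullet l) = 2 \/ leader l && signal l) /\ (~~ shield r \/ signal r).
Proof.
move=> H3; rewrite deltaE (st3E H3) ?(st7E _).1 ?(st7E _).2 ?st6E ?st6E2 /=.
have [La Lb Lc Ld Le] := st4E (st1 l); have [Ma Mb Mc Md Me] := st1E l;
have [Ra Rb Rc Rd Re] := st5E (st2 (st1 l) r); have [Sa Sb Sc Sd Se] := st2E (st1 l) r;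
rewrite ?Ma ?Mb ?Mc ?Md ?Me in La Lb Lc Ld Le;
rewrite ?Sa ?Sb ?Sc ?Sd ?Se in Ra Rb Rc Rd Re.
repeat (case: ifP => /=).
all: rewrite ?La ?Lb ?Lc ?Ld ?Le ?Ra ?Rb ?Rc ?Rd ?Re ?Se ?Me.
all: fin l r.
all: intros; split; solve [by left | by right].
Qed.

Lemma P15 l r : NF l r -> ~~ leader r -> (nat_of_ord (bullet l) != 0) || (leader l && signal l) -> signal (delta l r).2 = false.
Proof.
move=> H3; rewrite deltaE (st3E H3) ?(st7E _).1 ?(st7E _).2 ?st6E ?st6E2 /=.
have [La Lb Lc Ld Le] := st4E (st1 l); have [Ma Mb Mc Md Me] := st1E l;
have [Ra Rb Rc Rd Re] := st5E (st2 (st1 l) r); have [Sa Sb Sc Sd Se] := st2E (st1 l) r;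
rewrite ?Ma ?Mb ?Mc ?Md ?Me in La Lb Lc Ld Le;
rewrite ?Sa ?Sb ?Sc ?Sd ?Se in Ra Rb Rc Rd Re.
repeat (case: ifP => /=).
all: rewrite ?La ?Lb ?Lc ?Ld ?Le ?Ra ?Rb ?Rc ?Rd ?Re ?Se ?Me.
all: fin l r.
Qed.

Lemma NF_intro l r : 1 < N -> (~~ leader r -> dist r < N) ->
  (~~ leader r -> ~~ leader l -> nat_of_ord (bullet r) = 0 -> (dist l).+1 < N) -> NF l r.
Proof.
move=> HN H1 H2; rewrite /NF.
have [_ _ _ _ Se] := st2E (st1 l) r; have [_ _ _ _ Me] := st1E l.
rewrite Se Me. case Er: (leader r); first lia.
have Hr : ~~ leader r by rewrite Er.
case Eb: (nat_of_ord (bullet r) == 0); last by have := H1 Hr; lia.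
case El: (leader l); first lia.
have Hl : ~~ leader l by rewrite El.
have := H2 Hr Hl (eqP Eb); lia.
Qed.

End Delta.


Section Main.
Variables n N : nat.
Hypothesis Hn : 2 <= n.
Hypothesis HnN : n <= N.
Variables (C C' : config n N) (i : 'I_n).
Hypothesis HC' : forall j, C' j = if j == i then (delta (C i) (C (ordS i))).1
             else if j == ordS i then (delta (C i) (C (ordS i))).2 else C j.
Hypothesis HNI : C_NI C.

Local Notation l := (C i).
Local Notation r := (C (ordS i)).
Local Notation l' := (delta (C i) (C (ordS i))).1.
Local Notation r' := (delta (C i) (C (ordS i))).2.
Local Notation ri := (ordS i).

Lemma Hneq : ri != i.
Proof.
apply/eqP => /(congr1 val) /=. have := ltn_ord i.
case: (ltngtP i.+1 n) => H H'.
- rewrite modn_small //; lia.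
- lia.
- rewrite H modnn; lia.
Qed.

Lemma C'i : C' i = l'. Proof. by rewrite HC' eqxx. Qed.
Lemma C'r : C' ri = r'. Proof. by rewrite HC' (negbTE Hneq) eqxx. Qed.
Lemma C'o x : x != i -> x != ri -> C' x = C x.
Proof. by move=> /negbTE H1 /negbTE H2; rewrite HC' H1 H2. Qed.

Lemma HL : has_leader C. Proof. by case: HNI => [[]]. Qed.
Lemma Hsec x : secure C x. Proof. by case: HNI => _ [H _]. Qed.
Lemma Hmod x : nat_of_ord (bullet (C x)) = 2 -> modest C x.
Proof. by case: HNI => _ [_ H]; apply: H. Qed.

Lemma secF x : ~~ leader (C x) -> dist (C x) <= N - distR C x.
Proof. by have := Hsec x; rewrite /secure => + /negbTE H; rewrite H. Qed.
Lemma secT x : leader (C x) -> nat_of_ord (dist (C x)) = 0.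
Proof. by have := Hsec x; rewrite /secure => + H; rewrite H. Qed.

Lemma NFlr : NF l r.
Proof.
apply: NF_intro; first lia.
- move=> Hr. have := secF Hr. have := distR_pos HL Hr. lia.
- move=> Hr Hl _. have := secF Hl. rewrite (distR_succ Hn HL Hl).
  have := distR_pos HL Hr. lia.
Qed.

Lemma flag_o x : x != ri -> leader (C' x) = leader (C x).
Proof.
move=> Hx. case: (eqVneq x i) => [->|Hi]; first by rewrite C'i P1.
by rewrite C'o.
Qed.

Lemma distL_ri : distL C ri = if leader r then 0 else (distL C i).+1.
Proof.
case: ifP => H; first exact: (distL0 Hn).
by rewrite (distL_pred Hn HL) ?H // ordSK.
Qed.

Lemma modest_transfer k : modest C k ->
  (forall j, j <= distL C k -> C' (back j k) = C (back j k)) -> modest C' k.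
Proof.
move=> Hm Hag.
have Hd : distL C' k = distL C k.
  apply: (distL_agree Hn HL) => j Hj; by rewrite Hag.
apply/modestE; rewrite Hd => j Hj.
have := (modestE C k).1 Hm j Hj.
have Hdj : distL C' (back j k) = distL C (back j k).
  apply: (distL_agree Hn HL) => j' Hj'. rewrite (distL_back Hn HL Hj) in Hj'.
  rewrite -back_add Hag //. lia.
by rewrite /loc Hag // Hdj.
Qed.

Lemma endpoint k j : j <= distL C k -> (j == distL C k) -> leader (C (back j k)).
Proof. by move=> _ /eqP ->; have [_ ] := distL_ex k HL. Qed.

Lemma notend k j : j <= distL C k -> ~~ leader (C (back j k)) -> j < distL C k.
Proof.
move=> Hj Hl; rewrite ltn_neqAle Hj andbT; apply/negP => E.
by rewrite (endpoint Hj E) in Hl.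
Qed.

Section CaseA.
Hypothesis HA : leader r' = leader r.

Lemma flagA x : leader (C' x) = leader (C x).
Proof. case: (eqVneq x ri) => [->|H]; [by rewrite C'r HA | exact: flag_o]. Qed.

Lemma HL' : has_leader C'.
Proof. case: HL => x Hx; exists x; by rewrite flagA. Qed.

Lemma dLA x : distL C' x = distL C x.
Proof. apply: (distL_agree Hn HL) => j _; exact: flagA. Qed.
Lemma dRA x : distR C' x = distR C x.
Proof. apply: (distR_agree Hn HL) => j _; exact: flagA. Qed.

Lemma locA_i (e : bool) : (signal l ==> leader l) -> ~~ leader r ->
  (~~ leader r ==> [|| ~~ signal r, nat_of_ord (bullet l) != 0 | leader l && signal l]) ->
  (~~ leader l -> dist l <= distL C i) -> (e -> leader l && (shield l || signal l)) ->
  loc C' i e.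
Proof.
move=> H1 H2 H3 H4 H5. rewrite /loc C'i dLA; split.
- apply: P11 => //; [exact: NFlr | by rewrite HA].
- rewrite P8; case: ifP => // /negbT; exact: H4.
- move=> /H5 /andP [Hl Hs]. exact: P12 NFlr Hl Hs.
Qed.

Lemma locA_r (e : bool) : (signal r = false \/ (~~ leader r /\ (nat_of_ord (bullet l) != 0) || (leader l && signal l))) ->
  (~~ leader r -> nat_of_ord (bullet r) = 0 -> ~~ leader l -> dist l <= distL C i) ->
  (~~ leader r -> nat_of_ord (bullet r) != 0 -> dist r <= distL C ri) ->
  (e -> [/\ leader r, signal r = false & shield r]) ->
  loc C' ri e.
Proof.
move=> H1 H2 H3 H4. rewrite /loc C'r dLA; split.
- case: H1 => [H|[Hr H]].
  + case E: (signal r') => //. by rewrite (P4 NFlr E) in H.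
  + exact: P15 NFlr Hr H.
- case Er: (leader r).
  + rewrite P5 //; exact: NFlr.
  + have Hr : ~~ leader r by rewrite Er.
    rewrite distL_ri Er.
    case: (eqVneq (nat_of_ord (bullet r)) 0) => Hb.
    * rewrite (P6 NFlr Hr Hb). case: ifP => Hl; first lia.
      have := H2 Hr Hb (negbT Hl). lia.
    * rewrite (P7 NFlr Hr Hb). have := H3 Hr Hb. by rewrite distL_ri Er.
- move=> /H4 [Hr Hs Hsh]. by have [] := P9 NFlr Hr Hs Hsh.
Qed.

Lemma back_pred_eq k j : back j.+1 k = i -> back j k = ri.
Proof. by rewrite back_S' => <-; rewrite ord_predK. Qed.

Lemma modA_old k : k != i -> modest C k -> modest C' k.
Proof.
move=> Hki Hm. apply/modestE; rewrite dLA => j Hj.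
have Hloc := (modestE C k).1 Hm j Hj.
case: (eqVneq (back j k) i) => [Exi|Hxi].
  case: j Hj Hloc Exi => [|j1] Hj Hloc Exi; first by move: Hki; rewrite -Exi /= eqxx.
  have E1 := back_pred_eq Exi.
  have Hr1 : ~~ leader r.
    by rewrite -E1; apply: distL_min; lia.
  have [Hs1 _ _] := (modestE C k).1 Hm j1 ltac:(lia). rewrite E1 in Hs1.
  move: Hloc; rewrite Exi => -[Hs Hd He].
  apply: locA_i => //.
  - by rewrite Hs.
  - by rewrite Hr1 /= Hs1.
  - move=> HE. rewrite (He HE) orTb andbT -Exi. exact: (endpoint Hj HE).
case: (eqVneq (back j k) ri) => [Exr|Hxr].
  move: Hloc; rewrite Exr => -[Hs Hd He].
  apply: locA_r => //.
  - by left.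
  - move=> Hr _ _. have Hjd : j < distL C k by apply: notend; rewrite // Exr.
    have := (modestE C k).1 Hm j.+1 Hjd. rewrite back_S' Exr ordSK. by case.
  - move=> HE; split; [rewrite -Exr; exact: (endpoint Hj HE) | by [] | exact: He HE].
by rewrite /loc C'o // dLA.
Qed.

Lemma modA_new : nat_of_ord (bullet r) = 0 -> ~~ leader r ->
  (nat_of_ord (bullet l) = 2 \/ leader l && signal l) -> modest C' ri.
Proof.
move=> Hb Hr Hl2.
have Hcase : modest C i \/ (leader l /\ signal l).
  case: Hl2 => [/Hmod|/andP]; by [left|right].
have Hbl : (nat_of_ord (bullet l) != 0) || (leader l && signal l).
  case: Hl2 => [->|->] //; by rewrite orbT.
have HdL : ~~ leader l -> dist l <= distL C i.
  move=> Hl; case: Hcase => [Hm|[H _]]; last by rewrite H in Hl.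
  by have [_ ] := (modestE C i).1 Hm 0 (leq0n _).
have HrF : ~~ leader r -> nat_of_ord (bullet r) = 0 -> ~~ leader l -> dist l <= distL C i.
  by move=> _ _.
apply/modestE; rewrite dLA distL_ri (negbTE Hr) => j Hj.
case: j Hj => [|j1] Hj.
  apply: locA_r => //; first by right.
  by move=> _; rewrite Hb.
rewrite back_S ordSK eqSS. rewrite ltnS in Hj.
case: (eqVneq (back j1 i) i) => [Exi|Hxi].
  rewrite Exi. apply: locA_i => //.
  - case: Hcase => [Hm|[H1 H2]]; last by rewrite H1 implybT.
    by have [-> ] := (modestE C i).1 Hm 0 (leq0n _).
  - by rewrite Hr /= Hbl orbT.
  - move=> HE. case: Hcase => [Hm|[H1 H2]]; last by rewrite H1 H2 orbT.
    have [_ _ Hsh] := (modestE C i).1 Hm j1 Hj. rewrite Exi in Hsh.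
    rewrite (Hsh HE) andbT -{1}Exi. exact: (endpoint Hj HE).
case: (eqVneq (back j1 i) ri) => [Exr|Hxr].
  rewrite Exr. apply: locA_r => //; first by right.
  - by move=> _; rewrite Hb.
  - move=> HE. have := endpoint Hj HE. by rewrite Exr (negbTE Hr).
case: Hcase => [Hm|[H1 _]].
  have := (modestE C i).1 Hm j1 Hj. by rewrite /loc C'o // dLA.
have Hd0 : distL C i = 0 by apply: (distL0 Hn).
rewrite Hd0 leqn0 in Hj. move/eqP: Hj => Hj. by rewrite Hj eqxx in Hxi.
Qed.

Lemma secA x : secure C' x.
Proof.
rewrite /secure flagA dRA.
case: (eqVneq x i) => [->|Hxi].
  rewrite C'i P8. case Hl: (leader l) => //=. have Hl' : ~~ leader l by rewrite Hl.
  by have := secF Hl'.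
case: (eqVneq x ri) => [->|Hxr]; last by rewrite C'o //; exact: Hsec.
rewrite C'r. case Er: (leader r); first by rewrite P5 //; exact: NFlr.
have Hr : ~~ leader r by rewrite Er.
case: (eqVneq (nat_of_ord (bullet r)) 0) => Hb.
  rewrite (P6 NFlr Hr Hb). have [Hd _] := distR_ex ri HL.
  case: ifP => Hl; first lia.
  have := secF (negbT Hl). rewrite (distR_succ Hn HL (negbT Hl)). lia.
rewrite (P7 NFlr Hr Hb). by have := secF Hr.
Qed.

Lemma NI_A : C_NI C'.
Proof.
split; [split|split].
- exact: HL'.
- move=> k Hk. suff : modest C' k by case.
  move: Hk. case: (eqVneq k i) => [->|Hki]; first by rewrite C'i P2.
  case: (eqVneq k ri) => [->|Hkr]; last by rewrite C'o // => /Hmod; exact: modA_old.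
  rewrite C'r => Hb. have [Hb2|[Hr Hb0 Hl2]] := P13 NFlr Hb.
  + apply: modA_old; [exact: Hneq | exact: Hmod].
  + exact: modA_new.
- exact: secA.
- move=> k Hk.
  move: Hk. case: (eqVneq k i) => [->|Hki]; first by rewrite C'i P2.
  case: (eqVneq k ri) => [->|Hkr]; last by rewrite C'o // => /Hmod; exact: modA_old.
  rewrite C'r => Hb. have [Hb2|[Hr Hb0 Hl2]] := P13 NFlr Hb.
  + apply: modA_old; [exact: Hneq | exact: Hmod].
  + exact: modA_new.
Qed.

End CaseA.

Section CaseB.
Hypothesis HB1 : leader r.
Hypothesis HB2 : ~~ leader r'.

Lemma HB_facts : (nat_of_ord (bullet l) = 2 \/ leader l && signal l) /\ (~~ shield r \/ signal r).
Proof. exact: P14 NFlr HB1 HB2. Qed.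

Lemma bad_r (e : bool) : loc C ri e -> e -> False.
Proof.
move=> [Hs _ Hsh] /Hsh Hsh'. have [_ [H|H]] := HB_facts.
- by rewrite Hsh' in H.
- by rewrite Hs in H.
Qed.

Lemma ri_end k j : j <= distL C k -> back j k = ri -> j = distL C k.
Proof.
move=> Hj E. have [Hd _] := distL_ex k HL.
have := @distL_le _ _ C k j ltac:(lia). rewrite E => /(_ HB1). lia.
Qed.

Lemma ri_notpath k j : modest C k -> j <= distL C k -> back j k != ri.
Proof.
move=> Hm Hj; apply/eqP => E. have Ej := ri_end Hj E.
have := (modestE C k).1 Hm j Hj. rewrite E => /bad_r; apply. by rewrite Ej.
Qed.

Lemma HcaseB : modest C i \/ (leader l /\ signal l).
Proof. have [[/Hmod H|/andP H] _] := HB_facts; [left|right]; exact: H. Qed.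

Lemma Hpl j : j <= distL C i -> back j i != ri.
Proof.
move=> Hj. case: HcaseB => [Hm|[H1 _]]; first exact: ri_notpath.
rewrite (distL0 Hn H1) leqn0 in Hj. rewrite (eqP Hj) /= eq_sym; exact: Hneq.
Qed.

Lemma HLB' : has_leader C'.
Proof.
have [_ H] := distL_ex i HL. exists (back (distL C i) i).
by rewrite flag_o // Hpl.
Qed.

Lemma dLi_sub j : j <= distL C i -> distL C' (back j i) = distL C (back j i).
Proof.
move=> Hj. apply: (distL_agree Hn HL) => j' Hj'. rewrite (distL_back Hn HL Hj) in Hj'.
rewrite flag_o // -back_add. apply: Hpl; lia.
Qed.

Lemma secB x : secure C' x.
Proof.
rewrite /secure.
case: (eqVneq x ri) => [->|Hxr].
  rewrite C'r (negbTE HB2) P5 //; exact: NFlr.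
rewrite flag_o //.
case: (eqVneq x i) => [->|Hxi].
  rewrite C'i P8. case Hl: (leader l) => //=. have Hl' : ~~ leader l by rewrite Hl.
  case: HcaseB => [Hm|[H1 _]]; last by rewrite H1 in Hl'.
  have [_ Hd _] := (modestE C i).1 Hm 0 (leq0n _). rewrite /= in Hd.
  have := dLi_sub (leq0n (distL C i)). rewrite /= => E. rewrite -E in Hd.
  have Hl'' : ~~ leader (C' i) by rewrite flag_o // eq_sym Hneq.
  have := distLR Hn HLB' Hl''. lia.
rewrite C'o //. case Hx: (leader (C x)); first exact: secT.
have Hx' : ~~ leader (C x) by rewrite Hx.
set m := distR C x.
have Hmin : forall j, j < m -> fwd j x != ri.
  move=> j Hj; apply/eqP => E. have := distR_min Hj. by rewrite E HB1.
case: (eqVneq (fwd m x) ri) => [Em|Hm].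
- have Hm0 := distR_pos HL Hx'. rewrite -/m in Hm0.
  case Em1 : m Hm0 => [|m1] // _.
  have Ex : x = back m1 i.
    by rewrite -(back_fwd m x) Em Em1 back_S ordSK.
  have Hnl : forall j', j' <= m1 -> ~~ leader (C (back j' i)).
    move=> j' Hj'. have E2 : back j' i = fwd (m1 - j') x.
      by rewrite Ex -[X in fwd _ (back X i)](subnK Hj') back_add fwd_back.
    rewrite E2; apply: distR_min; rewrite -/m Em1; lia.
  have Hlt : m1 < distL C i.
    rewrite ltnNge; apply/negP => H. have [_ H2] := distL_ex i HL.
    by rewrite (negbTE (Hnl _ H)) in H2.
  case: HcaseB => [Hml|[H1 _]]; last by rewrite (distL0 Hn H1) in Hlt.
  have [_ Hd _] := (modestE C i).1 Hml m1 (ltnW Hlt).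
  rewrite -Ex in Hd. have := dLi_sub (ltnW Hlt). rewrite -Ex => E. rewrite -E in Hd.
  have Hl'' : ~~ leader (C' x) by rewrite flag_o.
  have := distLR Hn HLB' Hl''. lia.
- have E : distR C' x = m.
    apply: (distR_agree Hn HL) => j Hj. apply: flag_o.
    rewrite -/m in Hj.
    case: (ltngtP j m) => [/Hmin //|H|-> //]; lia.
  rewrite E. exact: secF.
Qed.

Lemma modB k : nat_of_ord (bullet (C' k)) = 2 -> modest C' k.
Proof.
case: (eqVneq k i) => [->|Hki]; first by rewrite C'i P2.
case: (eqVneq k ri) => [->|Hkr].
  rewrite C'r => Hb. have [Hb2|[Hr _ _]] := P13 NFlr Hb; last by rewrite HB1 in Hr.
  have H0 := (modestE C ri).1 (Hmod Hb2) 0 (leq0n _).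
  exfalso; apply: (bad_r H0). by rewrite (distL0 Hn HB1).
rewrite C'o // => /Hmod Hm. apply: modest_transfer => // j Hj.
apply: C'o; last exact: ri_notpath.
apply/eqP => E. case: j Hj E => [|j1] Hj E; first by move: Hki; rewrite -E /= eqxx.
have := ri_notpath Hm (ltnW Hj). by rewrite (back_pred_eq E) eqxx.
Qed.

Lemma NI_B : C_NI C'.
Proof.
split; [split|split].
- exact: HLB'.
- move=> k /modB; by case.
- exact: secB.
- exact: modB.
Qed.

End CaseB.

Lemma NI_step : C_NI C'.
Proof.
have H3 := P3 NFlr.
case Er: (leader r); case E: (leader r').
- apply: NI_A; by rewrite E Er.
- apply: NI_B; by rewrite ?E ?Er.
- by rewrite Er in H3; have := H3 E.
- apply: NI_A; by rewrite E Er.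
Qed.

End Main.


Unset Implicit Arguments.

Theorem lemma6 (N n : nat) (Hn : 2 <= n) (HnN : n <= N) (C C' : config n N) :
  C_NI C -> reachable C C' -> C_NI C'.
Proof.
move=> H R; elim: R H => [x y [k Hk] | x | x y z _ IH1 _ IH2] H.
- exact: (NI_step Hn HnN Hk H).
- exact: H.
- exact: IH2 (IH1 H).
Qed.
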